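(* (1) $\Box$ and $\lozenge$ are not interdefinable in $\mathbf{K}\mathsf{biG}$, $\mathbf{K}\mathsf{biG}_{\mathsf{fb}}^\mathsf{f}$, and $\mathbf{K}\mathsf{biG}^\mathsf{f}$. (2) Both the $\Box$ and $\lozenge$ fragments of $\mathbf{K}\mathsf{biG}$ are more expressive than $\mathbf{K}$.
   Context: $\mathbf{K}\mathsf{biG}$ (resp. $\mathbf{K}\mathsf{biG}^\mathsf{f}$) is the set of formulas of the language over $\wedge,\vee,\rightarrow,\ominus,\Box,\lozenge$ valid on all crisp (resp. fuzzy) frames, where $\ominus$ is Gödel coimplication ($b\ominus_\mathsf{G}a=0$ if $b\le a$, else $b$), $a\rightarrow_\mathsf{G}b=1$ if $a\le b$ else $b$, $\wedge,\vee$ are $\min,\max$, and on crisp frames $\Box$/$\lozenge$ are infimum/supremum over successors, on fuzzy frames $v(\Box\phi,w)=\inf_{w'}\{wRw'\rightarrow_\mathsf{G}v(\phi,w')\}$, $v(\lozenge\phi,w)=\sup_{w'}\{wRw'\wedge_\mathsf{G}v(\phi,w')\}$; validity means value $1$ at every state. Subscript $\mathsf{fb}$ restricts to finitely branching frames. $\Box$ and $\lozenge$ are not interdefinable in $\mathbf{K}\mathsf{biG}_{\mathsf{fb}}$ (validities on finitely branching crisp frames). Finitely branching crisp frames are defined in $\mathbf{K}\mathsf{biG}$ by $\mathbf{1}\ominus\lozenge((p\ominus q)\wedge q)$, and every $\mathbf{K}$-definable class of frames is $\mathbf{K}\mathsf{biG}$-definable. *)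

(* Defs.v *)
From HB Require Import structures.
From mathcomp Require Import all_boot all_order all_algebra.
From mathcomp Require Import boolp classical_sets functions cardinality reals.
From mathcomp Require Import Rstruct.
Import Order.TTheory GRing.Theory Num.Theory.

Set Implicit Arguments.
Unset Strict Implicit.
Unset Printing Implicit Defensive.

Local Open Scope classical_set_scope.
Local Open Scope ring_scope.

Notation RR := Rdefinitions.R.

Inductive form : Type :=
  | Var   of nat
  | Bot
  | Top
  | And   of form & form
  | Or    of form & form
  | Imp   of form & form
  | Coimp of form & form
  | Box   of form
  | Dia   of form.

Fixpoint box_free (phi : form) : bool :=
  match phi with
  | Var _ | Bot | Top => true
  | And a b | Or a b | Imp a b | Coimp a b => box_free a && box_free b
  | Box _ => false
  | Dia a => box_free a
  end.

Fixpoint dia_free (phi : form) : bool :=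
  match phi with
  | Var _ | Bot | Top => true
  | And a b | Or a b | Imp a b | Coimp a b => dia_free a && dia_free b
  | Box a => dia_free a
  | Dia _ => false
  end.

Definition Iff (a b : form) : form := And (Imp a b) (Imp b a).

Definition gimp (a b : RR) : RR := if a <= b then 1 else b.
Definition gcoimp (b a : RR) : RR := if b <= a then 0 else b.

Fixpoint eval (W : Type) (bx dx : (W -> RR) -> W -> RR)
    (V : nat -> W -> RR) (phi : form) : W -> RR :=
  match phi with
  | Var n => V n
  | Bot => fun _ => 0
  | Top => fun _ => 1
  | And a b => fun w => Num.min (eval bx dx V a w) (eval bx dx V b w)
  | Or a b => fun w => Num.max (eval bx dx V a w) (eval bx dx V b w)
  | Imp a b => fun w => gimp (eval bx dx V a w) (eval bx dx V b w)
  | Coimp a b => fun w => gcoimp (eval bx dx V a w) (eval bx dx V b w)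
  | Box a => bx (eval bx dx V a)
  | Dia a => dx (eval bx dx V a)
  end.

(* Since all values lie in [0,1], adding 1 (resp. 0) to the set implements the
   conventions inf ∅ = 1, sup ∅ = 0 without changing nonempty infima/suprema. *)

Definition crisp_box (W : Type) (Rel : W -> W -> Prop) (f : W -> RR) (w : W) : RR :=
  inf ([set 1] `|` [set x | exists2 w', Rel w w' & x = f w']).
Definition crisp_dia (W : Type) (Rel : W -> W -> Prop) (f : W -> RR) (w : W) : RR :=
  sup ([set 0] `|` [set x | exists2 w', Rel w w' & x = f w']).

Definition fuzzy_box (W : Type) (Rd : W -> W -> RR) (f : W -> RR) (w : W) : RR :=
  inf ([set 1] `|` [set x | exists w', x = gimp (Rd w w') (f w')]).
Definition fuzzy_dia (W : Type) (Rd : W -> W -> RR) (f : W -> RR) (w : W) : RR :=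
  sup ([set 0] `|` [set x | exists w', x = Num.min (Rd w w') (f w')]).

Definition unit_val (W : Type) (V : nat -> W -> RR) : Prop :=
  forall n w, 0 <= V n w <= 1.

Definition fuzzy_frame (W : Type) (Rd : W -> W -> RR) : Prop :=
  forall w w', 0 <= Rd w w' <= 1.

Definition crisp_fb (W : Type) (Rel : W -> W -> Prop) : Prop :=
  forall w, finite_set [set w' | Rel w w'].

Definition fuzzy_fb (W : Type) (Rd : W -> W -> RR) : Prop :=
  forall w, finite_set [set w' | 0 < Rd w w'].

Definition crisp_frame_valid (W : Type) (Rel : W -> W -> Prop) (phi : form) : Prop :=
  forall V : nat -> W -> RR, unit_val V ->
  forall w, eval (crisp_box Rel) (crisp_dia Rel) V phi w = 1.

Definition fuzzy_frame_valid (W : Type) (Rd : W -> W -> RR) (phi : form) : Prop :=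
  forall V : nat -> W -> RR, unit_val V ->
  forall w, eval (fuzzy_box Rd) (fuzzy_dia Rd) V phi w = 1.

Definition KbiG (phi : form) : Prop :=
  forall (W : Type) (Rel : W -> W -> Prop), crisp_frame_valid Rel phi.
Definition KbiG_fb (phi : form) : Prop :=
  forall (W : Type) (Rel : W -> W -> Prop), crisp_fb Rel -> crisp_frame_valid Rel phi.
Definition KbiGf (phi : form) : Prop :=
  forall (W : Type) (Rd : W -> W -> RR), fuzzy_frame Rd -> fuzzy_frame_valid Rd phi.
Definition KbiGf_fb (phi : form) : Prop :=
  forall (W : Type) (Rd : W -> W -> RR), fuzzy_frame Rd -> fuzzy_fb Rd ->
    fuzzy_frame_valid Rd phi.

Definition not_interdefinable (L : form -> Prop) : Prop :=
  (~ exists chi, box_free chi /\ L (Iff (Box (Var 0)) chi)) /\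
  (~ exists chi, dia_free chi /\ L (Iff (Dia (Var 0)) chi)).

Inductive kform : Type :=
  | KVar of nat
  | KBot
  | KImp of kform & kform
  | KAnd of kform & kform
  | KOr  of kform & kform
  | KBox of kform
  | KDia of kform.

Fixpoint ksat (W : Type) (Rel : W -> W -> Prop) (V : nat -> W -> Prop)
    (w : W) (phi : kform) : Prop :=
  match phi with
  | KVar n => V n w
  | KBot => False
  | KImp a b => ksat Rel V w a -> ksat Rel V w b
  | KAnd a b => ksat Rel V w a /\ ksat Rel V w b
  | KOr a b => ksat Rel V w a \/ ksat Rel V w b
  | KBox a => forall w', Rel w w' -> ksat Rel V w' a
  | KDia a => exists2 w', Rel w w' & ksat Rel V w' a
  end.

Definition frame_class := forall W : Type, (W -> W -> Prop) -> Prop.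

Definition K_defines (G : kform -> Prop) (C : frame_class) : Prop :=
  forall (W : Type) (Rel : W -> W -> Prop),
    C W Rel <-> (forall phi, G phi -> forall V w, ksat Rel V w phi).

Definition K_definable (C : frame_class) : Prop := exists G, K_defines G C.

Definition KbiG_defines (G : form -> Prop) (C : frame_class) : Prop :=
  forall (W : Type) (Rel : W -> W -> Prop),
    C W Rel <-> (forall phi, G phi -> crisp_frame_valid Rel phi).

Definition more_expressive_than_K (frag : form -> bool) : Prop :=
  (forall C : frame_class, K_definable C ->
     exists G : form -> Prop, (forall phi, G phi -> frag phi) /\ KbiG_defines G C) /\
  (exists (G : form -> Prop) (C : frame_class),
     (forall phi, G phi -> frag phi) /\ KbiG_defines G C /\ ~ K_definable C).

(* Main.v *)
From HB Require Import structures.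
From mathcomp Require Import all_boot all_order all_algebra.
From mathcomp Require Import boolp classical_sets functions cardinality reals.
From mathcomp Require Import Rstruct lra.
Require Import Defs.
Import Order.TTheory GRing.Theory Num.Theory.
Set Implicit Arguments.
Unset Strict Implicit.
Unset Printing Implicit Defensive.
Local Open Scope classical_set_scope.
Local Open Scope ring_scope.

Lemma inf_eq (S : set RR) x : S x -> (forall y, S y -> x <= y) -> inf S = x.
Proof.
move=> Sx lb; apply/le_anti/andP; split.
  by apply: ge_inf => //; exists x => y /lb.
by apply: lb_le_inf => //; exists x.
Qed.

Lemma sup_eq (S : set RR) x : S x -> (forall y, S y -> y <= x) -> sup S = x.
Proof.
move=> Sx ub; apply/le_anti/andP; split.
  by apply: ge_sup => //; exists x.
by apply: ub_le_sup => //; exists x => y /ub.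
Qed.

Lemma gimp_le a b : a <= b -> gimp a b = 1.
Proof. by rewrite /gimp => ->. Qed.
Lemma gimp_gt a b : b < a -> gimp a b = b.
Proof. by rewrite /gimp leNgt => ->. Qed.
Lemma gcoimp_le b a : b <= a -> gcoimp b a = 0.
Proof. by rewrite /gcoimp => ->. Qed.
Lemma gcoimp_gt b a : a < b -> gcoimp b a = b.
Proof. by rewrite /gcoimp leNgt => ->. Qed.

Inductive kd := K0 | K1 | KX.
Definition ap (k : kd) (x : RR) : RR := match k with K0 => 0 | K1 => 1 | KX => x end.

Lemma ap_mono k x y : x <= y -> ap k x <= ap k y.
Proof. by case: k => //=. Qed.
Lemma ap_01 k x : 0 <= x <= 1 -> 0 <= ap k x <= 1.
Proof. by case: k => //= _; rewrite lexx ler01. Qed.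

Definition uniform (op : RR -> RR -> RR) :=
  forall k1 k2, exists k3, forall x, 0 < x < 1 -> op (ap k1 x) (ap k2 x) = ap k3 x.


Ltac kclose :=
  move=> x /andP[x0 x1] /=;
  rewrite /gimp /gcoimp /Num.min /Num.max /Order.min /Order.max;
  repeat (case: ifP => /=; rewrite ?ltxx ?lexx //; move=> ?);
  try lra.

Ltac kfind := first [ exists K0; by kclose | exists K1; by kclose | exists KX; by kclose ].

Lemma unif_min : uniform Num.min.
Proof. by case; case; kfind. Qed.
Lemma unif_max : uniform Num.max.
Proof. by case; case; kfind. Qed.
Lemma unif_gimp : uniform gimp.
Proof. by case; case; kfind. Qed.
Lemma unif_gcoimp : uniform gcoimp.
Proof. by case; case; kfind. Qed.

Definition W3 := option bool.
Definition V3 (a b c : RR) (n : nat) (w : W3) : RR :=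
  match w with None => c | Some false => a | Some true => b end.

Definition inv3 (bx dx : (W3 -> RR) -> W3 -> RR) a b c chi :=
  exists g h, eval bx dx (V3 a b c) chi (Some false) = ap g a /\
              eval bx dx (V3 a b c) chi (Some true) = ap g b /\
              eval bx dx (V3 a b c) chi None = ap h c.

Lemma inv3_bin bx dx a b c op (U : uniform op) chi1 chi2 :
  0 < a < 1 -> 0 < b < 1 -> 0 < c < 1 ->
  inv3 bx dx a b c chi1 -> inv3 bx dx a b c chi2 ->
  exists g h, op (eval bx dx (V3 a b c) chi1 (Some false)) (eval bx dx (V3 a b c) chi2 (Some false)) = ap g a /\
              op (eval bx dx (V3 a b c) chi1 (Some true)) (eval bx dx (V3 a b c) chi2 (Some true)) = ap g b /\
              op (eval bx dx (V3 a b c) chi1 None) (eval bx dx (V3 a b c) chi2 None) = ap h c.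
Proof.
move=> ha hb hc [g1 [h1 [e1 [e2 e3]]]] [g2 [h2 [f1 [f2 f3]]]].
have [g3 Hg] := U g1 g2; have [h3 Hh] := U h1 h2.
exists g3, h3; rewrite e1 e2 e3 f1 f2 f3; split; [|split]; by [apply: Hg | apply: Hh].
Qed.

Lemma inv3_01 bx dx a b c chi : 0 <= a <= 1 -> 0 <= b <= 1 -> 0 <= c <= 1 ->
  inv3 bx dx a b c chi -> forall w, 0 <= eval bx dx (V3 a b c) chi w <= 1.
Proof.
move=> ha hb hc [g [h [e1 [e2 e3]]]] [[]|]; rewrite ?e1 ?e2 ?e3; exact: ap_01.
Qed.

Lemma boxfree_inv bx dx a b :
  0 < a -> a < b -> b < 1 ->
  (forall f : W3 -> RR, (forall x, 0 <= f x <= 1) -> f (Some false) <= f (Some true) ->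
     dx f None = f (Some true) /\ dx f (Some false) = 0 /\ dx f (Some true) = 0) ->
  forall chi, box_free chi -> inv3 bx dx a b b chi.
Proof.
move=> a0 ab b1 Hdx.
have ha : 0 < a < 1 by apply/andP; split => //; lra.
have hb : 0 < b < 1 by apply/andP; split => //; lra.
have ha' : 0 <= a <= 1 by apply/andP; split; lra.
have hb' : 0 <= b <= 1 by apply/andP; split; lra.
elim => [n|||c1 IH1 c2 IH2|c1 IH1 c2 IH2|c1 IH1 c2 IH2|c1 IH1 c2 IH2|c1 IH1|c1 IH1] //=.
- by exists KX, KX.
- by exists K0, K0.
- by exists K1, K1.
- by move=> /andP[/IH1 H1 /IH2 H2]; apply: inv3_bin unif_min _ _ _ _ _ H1 H2.
- by move=> /andP[/IH1 H1 /IH2 H2]; apply: inv3_bin unif_max _ _ _ _ _ H1 H2.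
- by move=> /andP[/IH1 H1 /IH2 H2]; apply: inv3_bin unif_gimp _ _ _ _ _ H1 H2.
- by move=> /andP[/IH1 H1 /IH2 H2]; apply: inv3_bin unif_gcoimp _ _ _ _ _ H1 H2.
- move=> /IH1 H1.
  have H01 := inv3_01 ha' hb' hb' H1.
  have [g [h [e1 [e2 e3]]]] := H1.
  have le : eval bx dx (V3 a b b) c1 (Some false) <= eval bx dx (V3 a b b) c1 (Some true).
    by rewrite e1 e2; apply: ap_mono; lra.
  have [d1 [d2 d3]] := Hdx _ H01 le.
  by exists K0, g; rewrite /= d1 d2 d3 e2.
Qed.

Lemma diafree_inv bx dx a b :
  0 < a -> a < b -> b < 1 ->
  (forall f : W3 -> RR, (forall x, 0 <= f x <= 1) -> f (Some false) <= f (Some true) ->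
     bx f None = f (Some false) /\ bx f (Some false) = 1 /\ bx f (Some true) = 1) ->
  forall chi, dia_free chi -> inv3 bx dx a b a chi.
Proof.
move=> a0 ab b1 Hbx.
have ha : 0 < a < 1 by apply/andP; split => //; lra.
have hb : 0 < b < 1 by apply/andP; split => //; lra.
have ha' : 0 <= a <= 1 by apply/andP; split; lra.
have hb' : 0 <= b <= 1 by apply/andP; split; lra.
elim => [n|||c1 IH1 c2 IH2|c1 IH1 c2 IH2|c1 IH1 c2 IH2|c1 IH1 c2 IH2|c1 IH1|c1 IH1] //=.
- by exists KX, KX.
- by exists K0, K0.
- by exists K1, K1.
- by move=> /andP[/IH1 H1 /IH2 H2]; apply: inv3_bin unif_min _ _ _ _ _ H1 H2.
- by move=> /andP[/IH1 H1 /IH2 H2]; apply: inv3_bin unif_max _ _ _ _ _ H1 H2.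
- by move=> /andP[/IH1 H1 /IH2 H2]; apply: inv3_bin unif_gimp _ _ _ _ _ H1 H2.
- by move=> /andP[/IH1 H1 /IH2 H2]; apply: inv3_bin unif_gcoimp _ _ _ _ _ H1 H2.
- move=> /IH1 H1.
  have H01 := inv3_01 ha' hb' ha' H1.
  have [g [h [e1 [e2 e3]]]] := H1.
  have le : eval bx dx (V3 a b a) c1 (Some false) <= eval bx dx (V3 a b a) c1 (Some true).
    by rewrite e1 e2; apply: ap_mono; lra.
  have [d1 [d2 d3]] := Hbx _ H01 le.
  by exists K1, g; rewrite /= d1 d2 d3 e1.
Qed.

Lemma iff_ne x y : 0 < x < 1 -> 0 <= y <= 1 -> x != y -> Num.min (gimp x y) (gimp y x) != 1.
Proof.
move=> /andP[x0 x1] /andP[y0 y1] xy.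
case/orP: (lt_total xy) => lt.
  rewrite (gimp_le (ltW lt)) (gimp_gt lt) /Num.min /Order.min.
  case: ltP => h; apply/eqP; lra.
rewrite (gimp_le (ltW lt)) (gimp_gt lt) /Num.min /Order.min.
case: ltP => h; apply/eqP; lra.
Qed.

Definition Rel3 (x y : W3) : Prop := match x, y with None, Some _ => True | _, _ => False end.
Definition Rd3 (x y : W3) : RR := match x, y with None, Some _ => 1 | _, _ => 0 end.

Definition box_ok (bx : (W3 -> RR) -> W3 -> RR) :=
  forall f : W3 -> RR, (forall x, 0 <= f x <= 1) -> f (Some false) <= f (Some true) ->
     bx f None = f (Some false) /\ bx f (Some false) = 1 /\ bx f (Some true) = 1.
Definition dia_ok (dx : (W3 -> RR) -> W3 -> RR) :=
  forall f : W3 -> RR, (forall x, 0 <= f x <= 1) -> f (Some false) <= f (Some true) ->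
     dx f None = f (Some true) /\ dx f (Some false) = 0 /\ dx f (Some true) = 0.

Definition a3 : RR := 1/3.
Definition b3 : RR := 2/3.
Lemma a3_pos : 0 < a3. Proof. rewrite /a3; lra. Qed.
Lemma ab3 : a3 < b3. Proof. rewrite /a3 /b3; lra. Qed.
Lemma b3_lt1 : b3 < 1. Proof. rewrite /b3; lra. Qed.

Lemma noninter_gen (L : form -> Prop) bx dx : box_ok bx -> dia_ok dx ->
  (forall phi c, L phi -> (c = a3 \/ c = b3) -> eval bx dx (V3 a3 b3 c) phi None = 1) ->
  not_interdefinable L.
Proof.
move=> Hb Hd HL.
have a0 := a3_pos; have ab := ab3; have b1 := b3_lt1.
have V01 : forall c, 0 <= c <= 1 -> forall x, 0 <= V3 a3 b3 c 0 x <= 1.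
  move=> c hc [[]|] //=; apply/andP; split; lra.
have Vle : forall c, V3 a3 b3 c 0 (Some false) <= V3 a3 b3 c 0 (Some true) by move=> c /=; lra.
split.
- move=> [chi [bf Lc]].
  have := HL _ b3 Lc (or_intror erefl) => /=.
  have [g [h [_ [_ e3]]]] := @boxfree_inv bx dx a3 b3 a0 ab b1 Hd chi bf.
  have hc : 0 <= b3 <= 1 by apply/andP; split; lra.
  have [-> _] := Hb _ (V01 _ hc) (Vle _).
  rewrite e3 /= => E.
  have : Num.min (gimp a3 (ap h b3)) (gimp (ap h b3) a3) != 1.
    apply: iff_ne; first by apply/andP; split; lra.
      exact: ap_01.
    by clear e3 E; case: h => /=; apply/eqP; lra.
  by rewrite E eqxx.
- move=> [chi [bf Lc]].
  have := HL _ a3 Lc (or_introl erefl) => /=.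
  have [g [h [_ [_ e3]]]] := @diafree_inv bx dx a3 b3 a0 ab b1 Hb chi bf.
  have hc : 0 <= a3 <= 1 by apply/andP; split; lra.
  have [-> _] := Hd _ (V01 _ hc) (Vle _).
  rewrite e3 /= => E.
  have : Num.min (gimp b3 (ap h a3)) (gimp (ap h a3) b3) != 1.
    apply: iff_ne; first by apply/andP; split; lra.
      exact: ap_01.
    by clear e3 E; case: h => /=; apply/eqP; lra.
  by rewrite E eqxx.
Qed.

Lemma crisp_box_ok : box_ok (crisp_box Rel3).
Proof.
move=> f f01 le; rewrite /crisp_box; split; [|split].
- apply: inf_eq; first by right; exists (Some false).
  move=> y [->|[[[]|] //= _ ->]] //; have := f01 (Some false); have := f01 (Some true); lra.
- by apply: inf_eq; [left | move=> y [->|[[[]|] //]]].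
- by apply: inf_eq; [left | move=> y [->|[[[]|] //]]].
Qed.

Lemma crisp_dia_ok : dia_ok (crisp_dia Rel3).
Proof.
move=> f f01 le; rewrite /crisp_dia; split; [|split].
- apply: sup_eq; first by right; exists (Some true).
  move=> y [->|[[[]|] //= _ ->]] //; have := f01 (Some false); have := f01 (Some true); lra.
- by apply: sup_eq; [left | move=> y [->|[[[]|] //]]].
- by apply: sup_eq; [left | move=> y [->|[[[]|] //]]].
Qed.

Lemma gimp0 (x : RR) : 0 <= x -> gimp 0 x = 1. Proof. exact: gimp_le. Qed.
Lemma gimp1 (x : RR) : x <= 1 -> gimp 1 x = x.
Proof. by rewrite /gimp => x1; case: ifP => // h; apply/le_anti; rewrite h x1. Qed.
Lemma min0 (x : RR) : 0 <= x -> Num.min 0 x = 0.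
Proof. by move=> h; rewrite /Num.min /Order.min; case: ltP => // ?; lra. Qed.
Lemma min1 (x : RR) : x <= 1 -> Num.min 1 x = x.
Proof. by move=> h; rewrite /Num.min /Order.min; case: ltP => // ?; lra. Qed.

Lemma fuzzy_box_ok : box_ok (fuzzy_box Rd3).
Proof.
move=> f f01 le; rewrite /fuzzy_box.
have G0 : forall x, gimp 0 (f x) = 1 by move=> x; apply: gimp0; case/andP: (f01 x).
have G1 : forall x, gimp 1 (f x) = f x by move=> x; apply: gimp1; case/andP: (f01 x).
split; [|split].
- apply: inf_eq; first by right; exists (Some false) => /=; rewrite G1.
  move=> y [->|[[[]|] /= ->]]; rewrite ?G0 ?G1 //; have := f01 (Some false); have := f01 (Some true); lra.
- by apply: inf_eq; [left | move=> y [->|[[[]|] /= ->]]; rewrite ?G0].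
- by apply: inf_eq; [left | move=> y [->|[[[]|] /= ->]]; rewrite ?G0].
Qed.

Lemma fuzzy_dia_ok : dia_ok (fuzzy_dia Rd3).
Proof.
move=> f f01 le; rewrite /fuzzy_dia.
have G0 : forall x, Num.min 0 (f x) = 0 by move=> x; apply: min0; case/andP: (f01 x).
have G1 : forall x, Num.min 1 (f x) = f x by move=> x; apply: min1; case/andP: (f01 x).
split; [|split].
- apply: sup_eq; first by right; exists (Some true) => /=; rewrite G1.
  move=> y [->|[[[]|] /= ->]]; rewrite ?G0 ?G1 //; have := f01 (Some false); have := f01 (Some true); lra.
- by apply: sup_eq; [left | move=> y [->|[[[]|] /= ->]]; rewrite ?G0].
- by apply: sup_eq; [left | move=> y [->|[[[]|] /= ->]]; rewrite ?G0].
Qed.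

Lemma V3_unit c : c = a3 \/ c = b3 -> unit_val (V3 a3 b3 c).
Proof.
have a0 := a3_pos; have ab := ab3; have b1 := b3_lt1.
move=> hc n [[]|] /=; apply/andP; split; case: hc => ?; subst; lra.
Qed.

Lemma Rd3_frame : fuzzy_frame Rd3.
Proof. by move=> [?|] [?|] /=; rewrite ?lexx ?ler01. Qed.

Lemma part1 : not_interdefinable KbiG /\ not_interdefinable KbiGf_fb /\ not_interdefinable KbiGf.
Proof.
split; [|split].
- apply: (noninter_gen crisp_box_ok crisp_dia_ok) => phi c H hc.
  exact: (H W3 Rel3 _ (V3_unit hc)).
- apply: (noninter_gen fuzzy_box_ok fuzzy_dia_ok) => phi c H hc.
  apply: (H W3 Rd3 Rd3_frame _ _ (V3_unit hc)).
  by move=> w; apply: finite_finset.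
- apply: (noninter_gen fuzzy_box_ok fuzzy_dia_ok) => phi c H hc.
  exact: (H W3 Rd3 Rd3_frame _ (V3_unit hc)).
Qed.

Definition Neg x := Imp x Bot.
Definition Dl x := Coimp Top (Coimp Top x).

Fixpoint tr (b : bool) (phi : kform) : form :=
  match phi with
  | KVar n => Dl (Var n)
  | KBot => Bot
  | KImp x y => Imp (tr b x) (tr b y)
  | KAnd x y => And (tr b x) (tr b y)
  | KOr x y => Or (tr b x) (tr b y)
  | KBox x => if b then Box (tr b x) else Neg (Dia (Neg (tr b x)))
  | KDia x => if b then Neg (Box (Neg (tr b x))) else Dia (tr b x)
  end.

Lemma tr_dia_free phi : dia_free (tr true phi).
Proof. by elim: phi => [n||x hx y hy|x hx y hy|x hx y hy|x hx|x hx] /=; rewrite ?hx ?hy. Qed.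
Lemma tr_box_free phi : box_free (tr false phi).
Proof. by elim: phi => [n||x hx y hy|x hx y hy|x hx y hy|x hx|x hx] /=; rewrite ?hx ?hy. Qed.

Definition ind (P : Prop) : RR := if `[< P >] then 1 else 0.

Lemma ind_ext P Q : (P <-> Q) -> ind P = ind Q.
Proof. by move=> h; rewrite /ind; case: asboolP => p; case: asboolP => q //; exfalso; tauto. Qed.

Lemma ind01 P : 0 <= ind P <= 1.
Proof. by rewrite /ind; case: asboolP; rewrite ?lexx ?ler01. Qed.

Lemma ind_imp P Q : gimp (ind P) (ind Q) = ind (P -> Q).
Proof.
rewrite /ind /gimp; case: asboolP => p; case: asboolP => q; case: asboolP => pq //=;
  rewrite ?lexx ?ler01 //; try tauto.
by rewrite ler10.
Qed.

Lemma ind_and P Q : Num.min (ind P) (ind Q) = ind (P /\ Q).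
Proof.
rewrite /ind /Num.min /Order.min; case: asboolP => p; case: asboolP => q; case: asboolP => pq //=;
  rewrite ?ltxx ?ltr01 ?ltr10 //; tauto.
Qed.

Lemma ind_or P Q : Num.max (ind P) (ind Q) = ind (P \/ Q).
Proof.
rewrite /ind /Num.max /Order.max; case: asboolP => p; case: asboolP => q; case: asboolP => pq //=;
  rewrite ?ltxx ?ltr01 ?ltr10 //; tauto.
Qed.

Lemma ind_false : 0 = ind False.
Proof. by rewrite /ind; case: asboolP. Qed.

Lemma ind_Dl (x : RR) : gcoimp 1 (gcoimp 1 x) = ind (1 <= x).
Proof.
rewrite /ind /gcoimp; case: asboolP => h; first by rewrite h ler10.
have -> : (1 <= x) = false by apply/negP.
by rewrite lexx.
Qed.

Lemma ind_T (P : Prop) : P -> ind P = 1.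
Proof. by rewrite /ind; case: asboolP. Qed.
Lemma ind_F (P : Prop) : ~ P -> ind P = 0.
Proof. by rewrite /ind; case: asboolP. Qed.

Lemma ind_box W (Rel : W -> W -> Prop) (P : W -> Prop) w :
  crisp_box Rel (fun w' => ind (P w')) w = ind (forall w', Rel w w' -> P w').
Proof.
rewrite /crisp_box; have [H|H] := asboolP (forall w', Rel w w' -> P w').
  rewrite (ind_T H); apply: inf_eq; first by left.
  by move=> y [->|[w' /H Pw ->]] //; rewrite /ind; case: asboolP.
have [w' Rw nP] : exists2 w', Rel w w' & ~ P w'.
  by apply: contra_notP H => nE w' Rw; apply: contra_notP nE => nP; exists w'.
rewrite (ind_F H); apply: inf_eq; first by right; exists w' => //; rewrite /ind; case: asboolP.
by move=> y [->|[w'' _ ->]]; [exact: ler01 | case/andP: (ind01 (P w''))].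
Qed.

Lemma ind_dia W (Rel : W -> W -> Prop) (P : W -> Prop) w :
  crisp_dia Rel (fun w' => ind (P w')) w = ind (exists2 w', Rel w w' & P w').
Proof.
rewrite /crisp_dia; have [H|H] := asboolP (exists2 w', Rel w w' & P w').
  have [w' Rw Pw] := H.
  rewrite (ind_T H); apply: sup_eq; first by right; exists w' => //; rewrite /ind; case: asboolP.
  by move=> y [->|[w'' _ ->]]; [exact: ler01 | case/andP: (ind01 (P w''))].
rewrite (ind_F H); apply: sup_eq; first by left.
move=> y [->|[w' Rw ->]] //; rewrite /ind; case: asboolP => // Pw.
by exfalso; apply: H; exists w'.
Qed.

Lemma tr_eval b W (Rel : W -> W -> Prop) (V : nat -> W -> RR) phi :
  forall w, eval (crisp_box Rel) (crisp_dia Rel) V (tr b phi) w =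
            ind (ksat Rel (fun n w => 1 <= V n w) w phi).
Proof.
elim: phi => [n||x IHx y IHy|x IHx y IHy|x IHx y IHy|x IHx|x IHx] w /=.
- by rewrite ind_Dl.
- exact: ind_false.
- by rewrite IHx IHy ind_imp.
- by rewrite IHx IHy ind_and.
- by rewrite IHx IHy ind_or.
- case: b IHx => IHx /=.
    by rewrite (funext IHx) ind_box.
  rewrite ind_false.
  have -> : (fun w0 => gimp (eval (crisp_box Rel) (crisp_dia Rel) V (tr false x) w0) (ind False))
     = (fun w0 => ind (~ ksat Rel (fun n w => 1 <= V n w) w0 x)).
    by apply: funext => w0; rewrite IHx ind_imp.
  rewrite ind_dia ind_imp; apply: ind_ext; split.
    move=> h w' Rw; apply: contra_notP h => nk; by exists w'.
  by move=> h [w' Rw nk]; apply: nk; apply: h.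
- case: b IHx => IHx /=; last by rewrite (funext IHx) ind_dia.
  rewrite ind_false.
  have -> : (fun w0 => gimp (eval (crisp_box Rel) (crisp_dia Rel) V (tr true x) w0) (ind False))
     = (fun w0 => ind (~ ksat Rel (fun n w => 1 <= V n w) w0 x)).
    by apply: funext => w0; rewrite IHx ind_imp.
  rewrite ind_box ind_imp; apply: ind_ext; split.
    move=> h; apply: contra_notP h => nE w' Rw k; apply: nE; by exists w'.
  by move=> [w' Rw k] h; apply: (h w' Rw).
Qed.

Lemma ind1 (P : Prop) : ind P = 1 -> P.
Proof. by rewrite /ind; case: asboolP => // _ /eqP; rewrite eq_sym oner_eq0. Qed.

Lemma ksat_ext W (Rel : W -> W -> Prop) (V V' : nat -> W -> Prop) :
  (forall n w, V n w <-> V' n w) -> forall phi w, ksat Rel V w phi <-> ksat Rel V' w phi.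
Proof.
move=> HV; elim => [n||x IHx y IHy|x IHx y IHy|x IHx y IHy|x IHx|x IHx] w /=.
- exact: HV.
- by [].
- by rewrite IHx IHy.
- by rewrite IHx IHy.
- by rewrite IHx IHy.
- by split => h w' Rw; apply/IHx; apply: h.
- by split => -[w' Rw h]; exists w' => //; apply/IHx.
Qed.

Lemma frag_def (b : bool) (C : frame_class) : K_definable C ->
  exists G : form -> Prop, (forall phi, G phi -> (if b then dia_free else box_free) phi) /\
                           KbiG_defines G C.
Proof.
move=> [G HG]; exists (fun phi => exists2 psi, G psi & phi = tr b psi); split.
  by move=> _ [psi _ ->]; case: b; [exact: tr_dia_free | exact: tr_box_free].
move=> W Rel; rewrite HG; split.
  by move=> H _ [psi Gpsi ->] V _ w; rewrite tr_eval; apply: ind_T; apply: H.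
move=> H psi Gpsi V w.
have U : unit_val (fun n w => ind (V n w)) by move=> n w'; exact: ind01.
have := H _ (ex_intro2 _ _ psi Gpsi erefl) _ U w.
rewrite tr_eval => /ind1; apply: (iffLR (@ksat_ext W Rel _ V _ psi w)) => n w'.
rewrite /ind; case: asboolP => h; split => //; rewrite ?lexx // ler10 //.
Qed.

Definition NN x := Neg (Neg x).
Definition Fm_box := Imp (Box (NN (Var 0))) (NN (Box (Var 0))).
Definition Fm_dia := Imp (Dl (Dia (Var 0))) (Dia (Dl (Var 0))).

Lemma Fm_box_frag : dia_free Fm_box. Proof. by []. Qed.
Lemma Fm_dia_frag : box_free Fm_dia. Proof. by []. Qed.

Definition RelO (X : Type) (P : X -> Prop) (x y : option X) : Prop :=
  match x, y with None, Some r => P r | _, _ => False end.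

Lemma NN_ind (x : RR) : gimp (gimp x 0) 0 = ind (0 < x).
Proof.
case: (ltP 0 x) => h.
  by rewrite (gimp_gt h) gimp_le // ind_T.
by rewrite (gimp_le h) gimp_gt ?ltr01 // ind_F // => /(le_lt_trans h); rewrite ltxx.
Qed.

Lemma pos_lb (X : eqType) (P : X -> Prop) (g : X -> RR) (s : seq X) :
  (forall x, P x -> 0 < g x) ->
  exists m : RR, [/\ 0 < m, m <= 1 & forall x, x \in s -> P x -> m <= g x].
Proof.
move=> Hg; elim: s => [|a s [m [m0 m1 Hm]]].
  by exists 1; split; rewrite ?ltr01 ?lexx.
have [Pa|nPa] := asboolP (P a).
  exists (Num.min m (g a)); split.
  - by rewrite lt_min m0 Hg.
  - by rewrite ge_min m1.
  - move=> x; rewrite inE => /orP[/eqP -> _|xs Px]; first by rewrite ge_min lexx orbT.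
    by rewrite ge_min Hm.
exists m; split => // x; rewrite inE => /orP[/eqP -> //|xs Px]; exact: Hm.
Qed.

Lemma fin_box_valid (X : finType) (P : X -> Prop) : crisp_frame_valid (RelO P) Fm_box.
Proof.
move=> V U w /=.
have E : (fun w0 => gimp (gimp (V 0 w0) 0) 0) = (fun w0 => ind (0 < V 0 w0)).
  by apply: funext => w0; rewrite NN_ind.
rewrite E ind_box NN_ind ind_imp; apply: ind_T => Hall.
have V0 : forall w, 0 <= V 0 w by move=> w'; case/andP: (U 0 w').
case: w Hall => [x|] Hall.
  by rewrite (_ : crisp_box _ _ _ = 1) ?ltr01 //; apply: inf_eq; [left|move=> y [->|[[]]]].
have [m [m0 m1 Hm]] := @pos_lb X P (fun x => V 0%N (Some x)) (enum X) (fun x Px => Hall (Some x) Px).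
apply: (lt_le_trans m0); apply: lb_le_inf; first by exists 1; left.
move=> y [->|[[z|] //= Pz ->]] //; apply: Hm => //; exact: mem_enum.
Qed.

Lemma fin_dia_valid (X : finType) (P : X -> Prop) : crisp_frame_valid (RelO P) Fm_dia.
Proof.
move=> V U w /=.
have E : (fun w0 => gcoimp 1 (gcoimp 1 (V 0 w0))) = (fun w0 => ind (1 <= V 0 w0)).
  by apply: funext => w0; rewrite ind_Dl.
rewrite E ind_dia ind_Dl ind_imp; apply: ind_T => Hs.
apply: contrapT => Hn.
suff : crisp_dia (RelO P) (V 0%N) w < 1 by lra.
have V01 : forall w, 0 <= V 0 w <= 1 by move=> w'; exact: U.
have Hlt : forall w', RelO P w w' -> V 0 w' < 1.
  move=> w' Rw; rewrite ltNge; apply/negP => h; apply: Hn; by exists w'.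
case: w Hlt {Hs Hn} => [x|] Hlt.
  by rewrite (_ : crisp_dia _ _ _ = 0) ?ltr01 //; apply: sup_eq; [left|move=> y [->|[[]]]].
have [m [m0 m1 Hm]] := @pos_lb X P (fun x => 1 - V 0%N (Some x)) (enum X)
   (fun x Px => ltac:(have := Hlt (Some x) Px; lra)).
apply: (@le_lt_trans _ _ (1 - m)); last by lra.
apply: ge_sup; first by exists 0; left.
move=> y [->|[[z|] //= Pz ->]]; first by lra.
have := Hm z (mem_enum _ z) Pz; lra.
Qed.

Definition P1 (r : RR) : Prop := 0 < r < 1.
Definition V1 (n : nat) (w : option RR) : RR :=
  match w with None => 0 | Some r => if 0 < r < 1 then r else 0 end.

Lemma V1_unit : unit_val V1.
Proof.
move=> n [r|] /=; last by rewrite lexx ler01.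
by case: ifP => [/andP[h1 h2]|_]; apply/andP; split; rewrite ?lexx ?ler01 //; lra.
Qed.

Lemma V1_01 w : 0 <= V1 0 w <= 1. Proof. exact: V1_unit. Qed.

Lemma F1_box_invalid : ~ crisp_frame_valid (RelO P1) Fm_box.
Proof.
move=> H; have := H V1 V1_unit None => /=.
have -> : crisp_box (RelO P1) (fun w0 => gimp (gimp (V1 0 w0) 0) 0) None = 1.
  apply: inf_eq; first by left.
  move=> y [->|[[r|] //= Pr ->]] //; move: Pr; rewrite /P1 => Pr; rewrite Pr.
  by case/andP: Pr => r0 _; rewrite (gimp_gt r0) gimp_le.
set m := crisp_box _ _ _.
have mle : m <= 0.
  rewrite leNgt; apply/negP => m0.
  have lb : has_lbound ([set 1] `|` [set x | exists2 w', RelO P1 None w' & x = V1 0 w']).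
    by exists 0 => y [->|[w' _ ->]]; [exact: ler01 | case/andP: (V1_01 w')].
  have m1 : m <= 1 by apply: ge_inf => //; left.
  have Pm : P1 (m / 2) by rewrite /P1; apply/andP; split; lra.
  have : m <= m / 2.
    apply: ge_inf => //; right; exists (Some (m / 2)) => //=.
    by move: Pm; rewrite /P1 => ->.
  lra.
rewrite (gimp_le mle) (gimp_gt ltr01) (gimp_gt ltr01) => /eqP; rewrite eq_sym oner_eq0.
by [].
Qed.

Lemma F1_dia_invalid : ~ crisp_frame_valid (RelO P1) Fm_dia.
Proof.
move=> H; have := H V1 V1_unit None => /=.
have -> : crisp_dia (RelO P1) (fun w0 => gcoimp 1 (gcoimp 1 (V1 0 w0))) None = 0.
  apply: sup_eq; first by left.
  move=> y [->|[[r|] //= Pr ->]] //; move: Pr; rewrite /P1 => Pr; rewrite Pr ind_Dl ind_F //.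
  by case/andP: Pr => _ r1; lra.
set s := crisp_dia _ _ _.
have s1 : 1 <= s.
  rewrite leNgt; apply/negP => s0.
  have ub : has_ubound ([set 0] `|` [set x | exists2 w', RelO P1 None w' & x = V1 0 w']).
    by exists 1 => y [->|[w' _ ->]]; [exact: ler01 | case/andP: (V1_01 w')].
  have s0' : 0 <= s by apply: ub_le_sup => //; left.
  have Pm : P1 ((s + 1) / 2) by rewrite /P1; apply/andP; split; lra.
  have : (s + 1) / 2 <= s.
    apply: ub_le_sup => //; right; exists (Some ((s + 1) / 2)) => //=.
    by move: Pm; rewrite /P1 => ->.
  lra.
rewrite ind_Dl ind_T // (gimp_gt ltr01) => /eqP; rewrite eq_sym oner_eq0.
by [].
Qed.

Fixpoint kvb (phi : kform) : nat :=
  match phi with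
  | KVar n => n.+1
  | KBot => 0
  | KImp x y | KAnd x y | KOr x y => maxn (kvb x) (kvb y)
  | KBox x | KDia x => kvb x
  end.

Section Truth.
Variables (X : Type) (P : X -> Prop) (V : nat -> option X -> Prop) (N : nat).

Definition typ (r : X) : {ffun 'I_N -> bool} := [ffun i : 'I_N => `[< V i (Some r) >]].
Definition PG (t : {ffun 'I_N -> bool}) : Prop := exists2 r, P r & typ r = t.
Definition VG (n : nat) (w : option {ffun 'I_N -> bool}) : Prop :=
  match w with None => V n None | Some t => exists h : (n < N)%N, t (Ordinal h) end.

Lemma truth phi : (kvb phi <= N)%N ->
  forall w, ksat (RelO P) V w phi <-> ksat (RelO PG) VG (omap typ w) phi.
Proof.
elim: phi => [n||x IHx y IHy|x IHx y IHy|x IHx y IHy|x IHx|x IHx] /=.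
- move=> nN [r|] //=; split.
    by move=> h; exists nN; rewrite ffunE /=; apply/asboolP.
  by move=> [h]; rewrite ffunE /= => /asboolP.
- by [].
- by rewrite geq_max => /andP[/IHx hx /IHy hy] w; rewrite hx hy.
- by rewrite geq_max => /andP[/IHx hx /IHy hy] w; rewrite hx hy.
- by rewrite geq_max => /andP[/IHx hx /IHy hy] w; rewrite hx hy.
- move=> /IHx hx [r|] /=; first by split => _ [].
  split.
    move=> h [t|] //= [r Pr <-]; apply/(hx (Some r)); exact: h.
  move=> h [r|] //= Pr; apply/(hx (Some r)); apply: h => /=; by exists r.
- move=> /IHx hx [r|] /=; first by split => -[[]].
  split.
    move=> [[r|] //= Pr k]; exists (Some (typ r)); first by exists r.
    exact/(hx (Some r)).
  move=> [[t|] //= [r Pr <-] k]; exists (Some r) => //; exact/(hx (Some r)).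
Qed.
End Truth.

Lemma not_Kdef (Fm : form) : ~ crisp_frame_valid (RelO P1) Fm ->
  (forall (X : finType) (P : X -> Prop), crisp_frame_valid (RelO P) Fm) ->
  ~ K_definable (fun W Rel => crisp_frame_valid Rel Fm).
Proof.
move=> Hinv Hfin [G HG]; apply: Hinv; apply/(HG _ (RelO P1)) => phi Gphi V w.
set N := kvb phi.
have HGp := (iffLR (HG _ (RelO (@PG RR P1 V N)))) (Hfin _ _) phi Gphi (@VG RR V N) (omap (@typ RR V N) w).
exact/(@truth RR P1 V N phi (leqnn N) w).
Qed.

Lemma more_box : more_expressive_than_K dia_free.
Proof.
split; first exact: (frag_def true).
exists (fun phi => phi = Fm_box), (fun W Rel => crisp_frame_valid Rel Fm_box); split; [|split].
- by move=> _ ->.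
- by move=> W Rel; split; [move=> h _ -> | apply].
- exact: not_Kdef F1_box_invalid fin_box_valid.
Qed.

Lemma more_dia : more_expressive_than_K box_free.
Proof.
split; first exact: (frag_def false).
exists (fun phi => phi = Fm_dia), (fun W Rel => crisp_frame_valid Rel Fm_dia); split; [|split].
- by move=> _ ->.
- by move=> W Rel; split; [move=> h _ -> | apply].
- exact: not_Kdef F1_dia_invalid fin_dia_valid.
Qed.

Theorem corollary2 :
  (not_interdefinable KbiG /\ not_interdefinable KbiGf_fb /\ not_interdefinable KbiGf) /\
  (more_expressive_than_K dia_free (* □-fragment *) /\
   more_expressive_than_K box_free (* ◇-fragment *)).
Proof. by split; [exact: part1 | split; [exact: more_box | exact: more_dia]]. Qed.
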